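(* Let $\mathcal{H}$ be a separable Hilbert space and let $\{f_n\}_{n=1}^\infty$ be a pseudo-Riesz basis for $\mathcal{H}$. If $\{g_n\}_{n=1}^\infty$ is a sequence in $\mathcal{H}$ with $\sum_{n=1}^\infty\|f_n-g_n\|^2<\infty$, then $\{g_n\}$ is also a pseudo-Riesz basis for $\mathcal{H}$.
   Context: A Bessel sequence $\{f_n\}$ in $\mathcal{H}$ is a pseudo-Riesz basis if there are a finite set $\sigma\subseteq\mathbb{N}$ and finitely many vectors $h_1,\dots,h_m\in\mathcal{H}$ such that $\{f_n\}_{n\notin\sigma}\cup\{h_1,\dots,h_m\}$ is a Riesz basis for $\mathcal{H}$. *)

(* Defs.v *)
From HB Require Import structures.
From mathcomp Require Import all_boot all_order all_algebra.
From mathcomp Require Import complex.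
From mathcomp Require Import all_classical all_reals all_analysis.
Import Order.TTheory GRing.Theory Num.Theory.
Import numFieldNormedType.Exports.

Set Implicit Arguments.
Unset Strict Implicit.
Unset Printing Implicit Defensive.

Local Open Scope ring_scope.
Local Open Scope classical_set_scope.

Section HilbertDefs.
Variable R : realType.
Variable V : completeNormedModType R[i].

(* ip is an inner product (linear in the first argument, conjugate
   symmetric) inducing the norm of V: <x,x> = ||x||^2.  Together with the
   completeness of V this makes (V, ip) a complex Hilbert space. *)
Definition inner_product (ip : V -> V -> R[i]) : Prop :=
  [/\ forall (a : R[i]) (x y z : V), ip (a *: x + y) z = a * ip x z + ip y z,
      forall x y : V, ip y x = (ip x y)^*
    & forall x : V, ip x x = `|x| ^+ 2].

Definition separable : Prop :=
  exists D : set V, countable D /\ closure D = setT.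

Definition lin_span (I : Type) (u : I -> V) : set V :=
  [set x | exists (s : seq I) (c : I -> R[i]), x = \sum_(i <- s) c i *: u i].

Definition orthonormal_basis (ip : V -> V -> R[i]) (I : eqType) (u : I -> V)
  : Prop :=
  (forall i j : I, ip (u i) (u j) = (i == j)%:R) /\
  closure (lin_span u) = setT.

Definition bounded_linear_op (U : V -> V) : Prop :=
  (forall (a : R[i]) (x y : V), U (a *: x + y) = a *: U x + U y) /\
  exists M : R[i], forall x : V, `|U x| <= M * `|x|.

Definition riesz_basis (ip : V -> V -> R[i]) (I : eqType) (e : I -> V)
  : Prop :=
  exists (u : I -> V) (U : V -> V),
    [/\ orthonormal_basis ip u, bounded_linear_op U, bijective U
      & forall i, e i = U (u i)].

Definition bessel_seq (ip : V -> V -> R[i]) (f : nat -> V) : Prop :=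
  exists B : R[i], 0 < B /\
    forall (x : V) (N : nat), \sum_(n < N) `|ip x (f n)| ^+ 2 <= B * `|x| ^+ 2.

(* index type  {n | n notin sigma} + {1..m}  of the family
   {f_n}_{n notin sigma} U {h_1,...,h_m} *)
Definition pr_index (sigma : seq nat) (m : nat) : eqType :=
  ({n : nat | n \notin sigma} + 'I_m)%type.

Definition pr_family (f : nat -> V) (sigma : seq nat) (m : nat)
  (h : 'I_m -> V) : pr_index sigma m -> V :=
  fun k => match k with inl n => f (sval n) | inr j => h j end.

Definition pseudo_riesz_basis (ip : V -> V -> R[i]) (f : nat -> V) : Prop :=
  bessel_seq ip f /\
  exists (sigma : seq nat) (m : nat) (h : 'I_m -> V),
    riesz_basis ip (@pr_family f sigma m h).

End HilbertDefs.

(* Main.v *)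
Require Import Defs.
From HB Require Import structures.
From mathcomp Require Import all_boot all_order all_algebra.
From mathcomp Require Import complex.
From mathcomp Require Import all_classical all_reals all_analysis.
From mathcomp Require Import lra ring.
Import Order.TTheory GRing.Theory Num.Theory.
Import numFieldNormedType.Exports.
Local Open Scope ring_scope.
Local Open Scope classical_set_scope.

Module Aux.
Set Implicit Arguments.
Unset Strict Implicit.
Unset Printing Implicit Defensive.

Notation RC := (real_complex _).

Section VRsec.
Variable R : realType.
Variable V : completeNormedModType R[i].

Lemma RC_ge0_eq (z : R[i]) : 0 <= z -> z = RC (complex.Re z).
Proof.
move=> z0; have := ger0_Im z0; case: z z0 => a b /= z0 ->. by [].
Qed.

Definition VR : Type := V.
HB.instance Definition _ := GRing.Zmodule.on VR.
Definition scR (r : R) (x : VR) : VR := (RC r *: (x : V)).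
Lemma scRA a b v : scR a (scR b v) = scR (a * b) v.
Proof. by rewrite /scR scalerA -rmorphM. Qed.
Lemma scR1 : left_id 1 scR.
Proof. by move=> x; rewrite /scR scale1r. Qed.
Lemma scRDr : right_distributive scR +%R.
Proof. by move=> a x y; rewrite /scR scalerDr. Qed.
Lemma scRDl v : {morph scR^~ v : a b / a + b}.
Proof. by move=> a b; rewrite /scR rmorphD scalerDl. Qed.
HB.instance Definition _ := GRing.Zmodule_isLmodule.Build R VR scRA scR1 scRDr scRDl.
Definition nR (x : V) : R := complex.Re `|x|.
Lemma nRE (x : V) : `|x| = RC (nR x).
Proof. exact: RC_ge0_eq. Qed.
Lemma nR_ge0 (x : V) : 0 <= nR x.
Proof. by have := normr_ge0 x; rewrite nRE -(rmorph0 (real_complex R)) lecR. Qed.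
Lemma nR_D (x y : VR) : nR (x + y) <= nR x + nR y.
Proof. by rewrite -(@lecR R) rmorphD /= -!nRE ler_normD. Qed.
Lemma normRC (l : R) : `|RC l| = RC `|l|.
Proof. by rewrite normc_def /= expr0n addr0 sqrtr_sqr. Qed.
Lemma nR_Z (l : R) (x : VR) : nR (l *: x) = `|l| * nR x.
Proof.
apply: (@complexI R); rewrite -nRE rmorphM /= -nRE -normRC.
exact: normrZ.
Qed.
Lemma nR_eq0 (x : VR) : nR x = 0 -> x = 0.
Proof. by move=> h; apply/normr0_eq0; rewrite nRE h. Qed.
HB.instance Definition _ := Lmodule_isNormed.Build R VR nR_D nR_Z nR_eq0.

Lemma normVR (x : VR) : `|x| = nR x.
Proof. by []. Qed.
Lemma scaleVR (r : R) (x : VR) : r *: x = (RC r *: (x : V) : V).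
Proof. by []. Qed.

Lemma VR_complete (F : set_system VR) : ProperFilter F -> cauchy F -> cvg F.
Proof.
move=> PF /cauchyP Fc.
have Fc' : cauchy_ex (F : set_system V).
  move=> e e0; have e0' : 0 < complex.Re e.
    by move: e0; rewrite ltcE => /andP[].
  have [x Fx] := Fc _ e0'; exists x; apply: filterS Fx => y.
  rewrite -!ball_normE /ball_ /= normVR => h.
  rewrite nRE [e in _ < e](@RC_ge0_eq e (ltW e0)) ltcR; exact: h.
have /cauchy_cvg : cauchy (F : set_system V) by exact: cauchy_exP.
move=> /cvg_ex[l Fl]; apply/cvg_ex; exists (l : VR).
apply/cvg_ballP => e e0.
have e0' : 0 < RC e by rewrite ltcR.
move: Fl => /cvg_ballP /(_ _ e0'); apply: filterS => y.
by rewrite -!ball_normE /ball_ /= nRE ltcR.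
Qed.
HB.instance Definition _ := Uniform_isComplete.Build VR VR_complete.
End VRsec.

Section IP.
Variable R : realType.
Variable V : completeNormedModType R[i].
Variable ip : V -> V -> R[i].
Hypothesis hip : inner_product ip.

Lemma ip0l z : ip 0 z = 0.
Proof.
case: hip => h _ _; have := h 1 0 0 z; rewrite scale1r addr0 mul1r.
by move=> /(congr1 (fun t => t - ip 0 z)); rewrite subrr addrK.
Qed.
Lemma ipDl x y z : ip (x + y) z = ip x z + ip y z.
Proof. by case: hip => h _ _; have := h 1 x y z; rewrite scale1r mul1r. Qed.
Lemma ipZl a x z : ip (a *: x) z = a * ip x z.
Proof. by case: hip => h _ _; have := h a x 0 z; rewrite addr0 ip0l addr0. Qed.
Lemma ipC x y : ip y x = (ip x y)^*.
Proof. by case: hip. Qed.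
Lemma ipxx x : ip x x = `|x| ^+ 2.
Proof. by case: hip. Qed.
Lemma ip0r z : ip z 0 = 0.
Proof. by rewrite ipC ip0l conjC0. Qed.
Lemma ipDr x y z : ip z (x + y) = ip z x + ip z y.
Proof. by rewrite ipC ipDl rmorphD /= -!ipC. Qed.
Lemma ipZr a x z : ip z (a *: x) = a^* * ip z x.
Proof. by rewrite ipC ipZl rmorphM /= -ipC. Qed.
Lemma ipNl x z : ip (- x) z = - ip x z.
Proof. by rewrite -scaleN1r ipZl mulN1r. Qed.
Lemma ipNr x z : ip z (- x) = - ip z x.
Proof. by rewrite -scaleN1r ipZr rmorphN1 mulN1r. Qed.
Lemma ipBl x y z : ip (x - y) z = ip x z - ip y z.
Proof. by rewrite ipDl ipNl. Qed.
Lemma ipBr x y z : ip z (x - y) = ip z x - ip z y.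
Proof. by rewrite ipDr ipNr. Qed.
Lemma ip_suml (I : Type) (s : seq I) (c : I -> R[i]) (w : I -> V) z :
  ip (\sum_(i <- s) c i *: w i) z = \sum_(i <- s) c i * ip (w i) z.
Proof.
elim: s => [|a s IH]; first by rewrite !big_nil ip0l.
by rewrite !big_cons ipDl ipZl IH.
Qed.
Lemma ip_sumr (I : Type) (s : seq I) (c : I -> R[i]) (w : I -> V) z :
  ip z (\sum_(i <- s) c i *: w i) = \sum_(i <- s) (c i)^* * ip z (w i).
Proof.
elim: s => [|a s IH]; first by rewrite !big_nil ip0r.
by rewrite !big_cons ipDr ipZr IH.
Qed.

Lemma bessel_seq_ineq (I : eqType) (s : seq I) (w : I -> V) x :
  uniq s -> (forall i j, i \in s -> j \in s -> ip (w i) (w j) = (i == j)%:R) ->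
  \sum_(i <- s) `|ip x (w i)| ^+ 2 <= `|x| ^+ 2.
Proof.
move=> us hw.
pose c i := ip x (w i).
pose S := \sum_(i <- s) c i *: w i.
have hS : \sum_(i <- s) `|ip x (w i)| ^+ 2 = \sum_(i <- s) c i * (c i)^*.
  by apply: eq_bigr => i _; rewrite normCK.
have e1 : ip x S = \sum_(i <- s) c i * (c i)^*.
  by rewrite ip_sumr; apply: eq_bigr => i _; rewrite mulrC.
have e2 : ip S x = \sum_(i <- s) c i * (c i)^*.
  by rewrite ip_suml; apply: eq_bigr => i _; rewrite -ipC.
have e3 : ip S S = \sum_(i <- s) c i * (c i)^*.
  rewrite ip_suml big_seq_cond [RHS]big_seq_cond; apply: eq_bigr => i /andP[si _].
  rewrite ip_sumr (bigD1_seq i) //= hw // eqxx mulr1 big_seq_cond big1 ?addr0 //.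
  by move=> j /andP[sj ji]; rewrite hw // eq_sym (negbTE ji) mulr0.
have : 0 <= ip (x - S) (x - S) by rewrite ipxx exprn_ge0.
by rewrite ipBl !ipBr e1 e2 e3 ipxx subrr subr0 subr_ge0 hS.
Qed.
End IP.

Section CS.
Variable R : realType.
Variable V : completeNormedModType R[i].
Variable ip : V -> V -> R[i].
Hypothesis hip : inner_product ip.

Lemma ip_CS x y : `|ip x y| ^+ 2 <= `|x| ^+ 2 * `|y| ^+ 2.
Proof.
have [->|y0] := eqVneq y 0.
  by rewrite ip0r // !normr0 !expr2 mul0r !mulr0.
have ny0 : `|y| != 0 by rewrite normr_eq0.
pose w := `|y|^-1 *: y.
have cj : (`|y|^-1)^* = `|y|^-1 by rewrite geC0_conj // invr_ge0.
have ww : ip w w = 1.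
  rewrite ipZl // ipZr // cj ipxx // mulrA -expr2 -exprMn mulVf //.
  by rewrite expr1n.
have := @bessel_seq_ineq R V ip hip unit [:: tt] (fun=> w) x erefl.
rewrite big_seq1 => /(_ (fun i j _ _ => ww)).
rewrite ipZr // cj normrM normfV normr_id exprMn exprVn => h.
have y2 : 0 < `|y| ^+ 2 by rewrite exprn_gt0 // normr_gt0.
by rewrite mulrC -ler_pdivrMl // mulrC.
Qed.

Lemma sqr_normB_le (a b : R[i]) : `|a - b| ^+ 2 <= 2 * `|a| ^+ 2 + 2 * `|b| ^+ 2.
Proof.
apply: (@le_trans _ _ ((`|a| + `|b|) ^+ 2)).
  apply: lerXn2r; [by rewrite nnegrE | by rewrite nnegrE addr_ge0 | exact: ler_normB].
rewrite (@RC_ge0_eq R `|a|) // (@RC_ge0_eq R `|b|) //.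
rewrite -rmorphD -!rmorphXn /= -(rmorph_nat (real_complex R) 2) -!rmorphM -rmorphD lecR.
move: (Normc.normc a) (Normc.normc b) => p q.
have := sqr_ge0 (p - q); nra.
Qed.

Lemma bessel_perturb (f g : nat -> V) :
  bessel_seq ip f ->
  (exists M : R[i], forall N : nat, \sum_(n < N) `|f n - g n| ^+ 2 <= M) ->
  bessel_seq ip g.
Proof.
move=> [B [B0 hB]] [M hM].
have M0 : 0 <= M by have := hM 0%N; rewrite big_ord0.
exists (2 * B + 2 * M); split.
  apply: (@lt_le_trans _ _ (2 * B)); first by rewrite pmulr_rgt0.
  by rewrite lerDl mulr_ge0.
move=> x N.
apply: (@le_trans _ _ (\sum_(n < N) (2 * `|ip x (f n)| ^+ 2 + 2 * (`|x| ^+ 2 * `|f n - g n| ^+ 2)))).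
  apply: ler_sum => n _.
  have -> : ip x (g n) = ip x (f n) - ip x (f n - g n) by rewrite ipBr // opprB addrC subrK.
  apply: (le_trans (sqr_normB_le _ _)); rewrite lerD2l ler_pM2l //.
  exact: ip_CS.
have e1 : \sum_(n < N) 2 * `|ip x (f n)| ^+ 2 = 2 * \sum_(n < N) `|ip x (f n)| ^+ 2.
  by rewrite mulr_sumr.
have e2 : \sum_(n < N) 2 * (`|x| ^+ 2 * `|f n - g n| ^+ 2) =
    2 * (`|x| ^+ 2 * \sum_(n < N) `|f n - g n| ^+ 2).
  by rewrite !mulr_sumr.
rewrite big_split /= e1 e2 (mulrDl (2 * B)); apply: lerD.
  by rewrite -mulrA; apply: ler_wpM2l => //; exact: hB.
by rewrite -mulrA; apply: ler_wpM2l => //; rewrite mulrC; apply: ler_wpM2r.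
Qed.
End CS.

Section OM.
Variable R : realType.
Variable X : completeNormedModType R.
Variable T : X -> X.
Hypothesis Tlin : forall (a : R) x y, T (a *: x + y) = a *: T x + T y.
Variable M : R.
Hypothesis TM : forall x, `|T x| <= M * `|x|.

Lemma T0 : T 0 = 0.
Proof.
have := Tlin 1 0 0; rewrite !scale1r addr0.
by move=> /(congr1 (fun t => t - T 0)); rewrite subrr addrK => <-.
Qed.
Lemma TD x y : T (x + y) = T x + T y.
Proof. by have := Tlin 1 x y; rewrite !scale1r. Qed.
Lemma TZ a x : T (a *: x) = a *: T x.
Proof. by have := Tlin a x 0; rewrite !addr0 T0 addr0. Qed.
Lemma TN x : T (- x) = - T x.
Proof. by rewrite -scaleN1r TZ scaleN1r. Qed.
Lemma TB x y : T (x - y) = T x - T y.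
Proof. by rewrite TD TN. Qed.

Lemma Tcvg (s : nat -> X) l : s @ \oo --> l -> (fun n => T (s n)) @ \oo --> T l.
Proof.
move=> /cvgrPdist_lt sl; apply/cvgrPdist_lt => e e0.
have M1 : 0 < `|M| + 1 by have := normr_ge0 M; lra.
have := sl (e / (`|M| + 1)) (divr_gt0 e0 M1); apply: filterS => n h.
rewrite -TB (le_lt_trans (TM _)) //.
apply: (@le_lt_trans _ _ ((`|M| + 1) * `|l - s n|)).
  by apply: ler_wpM2r => //; have := ler_norm M; lra.
by rewrite mulrC -ltr_pdivlMr.
Qed.

Lemma iter_solve (C : R) : 0 <= C ->
  (forall y, exists x, `|x| <= C * `|y| /\ `|y - T x| <= `|y| / 2) ->
  forall y, exists x, T x = y /\ `|x| <= 2 * C * `|y|.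
Proof.
move=> C0 hS y.
have [S HS] := choice hS.
pose r := fun k => iter k (fun z => z - T (S z)) y.
have rS k : r k.+1 = r k - T (S (r k)) by [].
have h2 : `|2^-1 : R| < 1 by rewrite ger0_norm ?invr_ge0 // invf_lt1 // ltr1n.
have rb k : `|r k| <= geometric `|y| 2^-1 k.
  elim: k => [|k IH]; first by rewrite /= expr0 mulr1.
  rewrite rS; apply: (le_trans (proj2 (HS _))).
  move: IH; rewrite /geometric /= exprSr => IH.
  by rewrite mulrA; apply: ler_wpM2r => //; rewrite invr_ge0.
pose u := fun k => S (r k).
have ub k : `|u k| <= geometric (C * `|y|) 2^-1 k.
  apply: (le_trans (proj1 (HS _))); rewrite /= -mulrA.
  by apply: ler_wpM2l => //; exact: rb.
have cvn : cvgn [normed series u].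
  apply: (@series_le_cvg _ _ (geometric (C * `|y|) 2^-1)).
  - by move=> n; exact: normr_ge0.
  - by move=> n; apply: geometric_ge0; rewrite ?mulr_ge0 // invr_ge0.
  - exact: ub.
  - exact: is_cvg_geometric_series.
have cu := normed_cvg cvn.
exists (limn (series u)); split.
  have h1 := @Tcvg (series u) _ cu.
  have e n : T (series u n) = y - r n.
    elim: n => [|n IH]; first by rewrite /series /= big_geq // T0 subrr.
    by rewrite seriesSr TD IH rS opprB addrA addrAC.
  have r0 : r @ \oo --> 0.
    apply/cvgrPdist_lt => ep ep0.
    have := cvg_geometric `|y| h2 => /cvgrPdist_lt /(_ ep ep0).
    apply: filterS => n; rewrite sub0r normrN sub0r normrN => hn.
    by apply: (le_lt_trans (rb n)); apply: le_lt_trans hn; exact: ler_norm.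
  have h3 : (fun n => T (series u n)) @ \oo --> y.
    rewrite (_ : (fun n => T (series u n)) = (fun n => y - r n)); last first.
      by apply: funext => n; rewrite e.
    by rewrite -[X in _ --> X]subr0; apply: cvgB => //; exact: cvg_cst.
  exact: (cvg_unique _ h1 h3).
apply: (le_trans (lim_series_norm cvn)).
apply: limr_le => //; apply: nearW => n.
apply: (@le_trans _ _ (series (geometric (C * `|y|) 2^-1) n)).
  by apply: ler_sum_nat => k _; exact: ub.
apply: (le_trans (@geometric_le_lim _ n (C * `|y|) 2^-1 _ _ h2)); [by rewrite mulr_ge0|by []|].
have -> : (1 - 2^-1 : R) = 2^-1 by lra.
by rewrite invrK mulrC mulrA.
Qed.
End OM.

Section OM2.
Variable R : realType.
Variable X : completeNormedModType R.
Variable T : X -> X.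
Hypothesis Tlin : forall (a : R) x y, T (a *: x + y) = a *: T x + T y.

Definition Pap (t : R) (y : X) :=
  forall e, 0 < e -> exists x, `|x| <= t /\ `|y - T x| < e.

Lemma open_map : (forall y, exists x, T x = y) ->
  exists C, 0 <= C /\ forall y, exists x, `|x| <= C * `|y| /\ `|y - T x| <= `|y| / 2.
Proof.
move=> Tsurj.
pose G n := ~` [set y | Pap n%:R y].
have Gopen n : open (G n).
  rewrite openE => y Gy; rewrite /interior; apply/nbhs_ballP.
  have [e [e0 he]] : exists e, 0 < e /\ forall x, `|x| <= n%:R -> e <= `|y - T x|.
    apply: contra_notP Gy => /= hne; move=> e e0.
    apply: contra_notP hne => hx; exists e; split => // x xn.
    rewrite leNgt; apply/negP => lt; apply: hx; exists x; split => //.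
  exists (e / 2); first exact: divr_gt0.
  move=> z; rewrite -ball_normE /ball_ /= => yz Pz.
  have e2 : 0 < e / 2 by lra.
  have [x [xn hx]] := Pz (e / 2) e2.
  have := he x xn.
  have : `|y - T x| <= `|y - z| + `|z - T x|.
    have -> : y - T x = (y - z) + (z - T x) by rewrite addrA subrK.
    exact: ler_normD.
  lra.
have [n nd] : exists n, ~ dense (G n).
  case: (pselect (exists n, ~ dense (G n))) => // hall; exfalso.
  have hd : forall n, dense (G n).
    by move=> n; apply: contra_notP hall => h; exists n.
  have := @Baire R X G (fun i => conj (Gopen i) (hd i)) setT.
  case; [by exists 0|exact: openT|] => y [_ yG].
  have [x Txy] := Tsurj y.
  have hn : `|x| <= (Num.Def.truncn `|x|).+1%:R by apply/ltW/truncnS_gt.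
  apply: (yG (Num.Def.truncn `|x|).+1 I) => e e0; exists x; split => //.
  by rewrite Txy subrr normr0.
have [Ob [[y0 y0O] OG]] := denseNE nd.
have OF z : Ob z -> Pap n%:R z.
  move=> Oz; case: (pselect (Pap n%:R z)) => // nP; exfalso.
  have : (Ob `&` G n) z by split.
  by rewrite OG.
have [rho rho0 brho] : nbhs_ball y0 Ob by apply/nbhs_ballP/open_nbhs_nbhs.
have rpos : 0 < rho := rho0.
have hz z : `|z| < rho -> Pap (2 * n%:R) z.
  move=> zr e e0.
  have e2 : 0 < e / 2 by lra.
  have O1 : Ob (y0 + z).
    apply: brho; rewrite -ball_normE /ball_ /= opprD addrA subrr sub0r normrN //.
  have O2 : Ob y0 by apply: brho; rewrite -ball_normE /ball_ /= subrr normr0.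
  have [x1 [x1n h1]] := OF _ O1 _ e2.
  have [x2 [x2n h2]] := OF _ O2 _ e2.
  exists (x1 - x2); split.
    by apply: (le_trans (ler_normB _ _)); lra.
  have -> : z - T (x1 - x2) = (y0 + z - T x1) - (y0 - T x2).
    by rewrite (@TB _ _ _ Tlin) [y0 + z]addrC (addrAC z) addrKA opprK opprB addrA addrAC.
  by apply: (le_lt_trans (ler_normB _ _)); lra.
exists (4 * n%:R / rho); split.
  by rewrite divr_ge0 // ?mulr_ge0 // ltW.
move=> y; have [->|y0'] := eqVneq y 0.
  exists 0; rewrite !normr0 mulr0 lexx; split => //.
  by rewrite (@T0 _ _ _ Tlin) subrr normr0 mul0r.
have ny : 0 < `|y| by rewrite normr_gt0.
pose k := rho / (2 * `|y|).
have k0 : 0 < k by rewrite divr_gt0 // mulr_gt0.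
have yne : `|y| != 0 by rewrite gt_eqF.
have rne : rho != 0 by rewrite gt_eqF.
have kinv : k^-1 = 2 * `|y| / rho by rewrite /k invf_div.
have hzk : `|k *: y| < rho.
  rewrite normrZ gtr0_norm //.
  have -> : k * `|y| = rho / 2 by rewrite /k; field.
  lra.
have rho4 : 0 < rho / 4 by lra.
have [x' [x'n hx']] := hz _ hzk _ rho4.
exists (k^-1 *: x'); split.
  rewrite normrZ gtr0_norm ?invr_gt0 // kinv.
  have -> : 4 * n%:R / rho * `|y| = 2 * `|y| / rho * (2 * n%:R) by field.
  by apply: ler_wpM2l => //; rewrite divr_ge0 ?mulr_ge0 // ltW.
have -> : y - T (k^-1 *: x') = k^-1 *: (k *: y - T x').
  by rewrite (@TZ _ _ _ Tlin) scalerBr scalerA mulVf ?gt_eqF // scale1r.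
rewrite normrZ gtr0_norm ?invr_gt0 // kinv.
have -> : `|y| / 2 = 2 * `|y| / rho * (rho / 4) by field.
by apply: ler_wpM2l; [rewrite divr_ge0 ?mulr_ge0 // ltW | exact: ltW].
Qed.
End OM2.

Lemma amgm (R : realType) (a b s si : R) : 0 < s -> s * si = 1 ->
  a * b <= (s * a ^+ 2 + si * b ^+ 2) / 2.
Proof. move=> s0 ssi. have si0 : 0 < si by nra.
have h := sqr_ge0 (s * a - b).
have : 0 <= (s * a - b) ^+ 2 * si by apply: mulr_ge0 => //; exact: ltW.
nra. Qed.

Section K.
Variable R : realType.
Variable V : completeNormedModType R[i].
Variable ip : V -> V -> R[i].
Hypothesis hip : inner_product ip.

Definition cR (z : R[i]) : R := complex.Re `|z|.
Lemma cRE z : `|z| = RC (cR z).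
Proof. exact: RC_ge0_eq. Qed.
Lemma cR_ge0 z : 0 <= cR z.
Proof. by have := normr_ge0 z; rewrite cRE -(rmorph0 (real_complex R)) lecR. Qed.
Lemma nRZ (a : R[i]) (v : V) : nR (a *: v) = cR a * nR v.
Proof. by apply: (@complexI R); rewrite -nRE normrZ cRE nRE rmorphM. Qed.

Variables (w d : nat -> V).
Hypothesis wbes : forall x b, \sum_(n < b) `|ip x (w n)| ^+ 2 <= `|x| ^+ 2.
Variable del : R.
Hypothesis del0 : 0 < del.
Hypothesis dtail : forall b, \sum_(n < b) nR (d n) ^+ 2 <= del ^+ 2.

Lemma wbesR x b : \sum_(n < b) cR (ip x (w n)) ^+ 2 <= nR x ^+ 2.
Proof.
rewrite -lecR rmorph_sum /=.
have e1 z : RC (cR z ^+ 2) = `|z| ^+ 2 by rewrite cRE rmorphXn.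
have e2 : RC (nR x ^+ 2) = `|x| ^+ 2 by rewrite nRE rmorphXn.
under eq_bigr do rewrite e1.
by rewrite e2; exact: wbes.
Qed.

Definition termK (x : V) (n : nat) : VR V := (ip x (w n) *: d n : V).
Lemma termK_norm x n : `|termK x n| = cR (ip x (w n)) * nR (d n).
Proof. by rewrite normVR nRZ. Qed.

Lemma normed_bound x s si : 0 < s -> s * si = 1 -> forall b,
   [normed series (termK x)] b <= (s * nR x ^+ 2 + si * del ^+ 2) / 2.
Proof.
move=> s0 ssi b; rewrite /series /=.
apply: (@le_trans _ _ (\sum_(0 <= k < b) ((s * cR (ip x (w k)) ^+ 2 + si * nR (d k) ^+ 2) / 2))).
  apply: ler_sum_nat => k _; rewrite termK_norm; exact: amgm.
rewrite -mulr_suml big_split /= -!mulr_sumr !big_mkord.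
apply: ler_wpM2r; first by rewrite invr_ge0.
have si0 : 0 <= si by nra.
apply: lerD.
  by apply: ler_wpM2l; [exact: ltW | exact: wbesR].
by apply: ler_wpM2l => //; exact: dtail.
Qed.

Lemma Knormcvg x : cvgn [normed series (termK x)].
Proof.
apply: nondecreasing_is_cvgn.
  by apply: nondecreasing_series => n _ _; exact: normr_ge0.
exists ((1 * nR x ^+ 2 + 1 * del ^+ 2) / 2) => _ [n _ <-].
by apply: normed_bound; rewrite ?mulr1.
Qed.

Lemma Kcvg x : cvgn (series (termK x)).
Proof. by apply: normed_cvg; exact: Knormcvg. Qed.

Definition Kop (x : V) : V := limn (series (termK x)).

Lemma series_zero (x : V) : (forall n, ip x (w n) = 0) -> Kop x = 0.
Proof.
move=> h; rewrite /Kop.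
have -> : series (termK x) = fun=> (0 : VR V).
  apply: funext => n; rewrite /series /= big1 // => k _.
  by rewrite /termK h scale0r.
exact: (@cvg_lim (VR V) (@norm_hausdorff _ (VR V)) _ _ _ (fun=> (0 : VR V)) 0 (cvg_cst _)).
Qed.

Lemma Kbound x : nR (Kop x) <= del * nR x.
Proof.
have [x0|xpos] := eqVneq (nR x) 0.
  rewrite x0 mulr0 series_zero ?nR_ge0 //.
    by rewrite /nR normr0.
  by move=> n; rewrite (nR_eq0 x0) ip0l.
have nx : 0 < nR x by rewrite lt0r xpos nR_ge0.
have s0 : 0 < del / nR x by rewrite divr_gt0.
have ssi : del / nR x * (nR x / del) = 1.
  by field; rewrite xpos gt_eqF.
have hl := @lim_series_norm _ _ _ (@Knormcvg x).
rewrite -normVR /Kop; apply: (le_trans hl).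
apply: limr_le; first exact: Knormcvg.
apply: nearW => b; apply: (le_trans (normed_bound x s0 ssi b)).
have -> : (del / nR x * nR x ^+ 2 + nR x / del * del ^+ 2) / 2 = del * nR x.
  by field; rewrite xpos gt_eqF.
by [].
Qed.

Lemma scale_cvg (a : R[i]) (s : nat -> VR V) (l : VR V) : s @ \oo --> l ->
  (fun n => (a *: (s n : V) : VR V)) @ \oo --> (a *: (l : V) : VR V).
Proof.
move=> sl.
have Tlin : forall (r : R) (x y : VR V), (a *: ((r *: x + y : VR V) : V) : VR V) =
   r *: (a *: (x : V) : VR V) + (a *: (y : V) : VR V).
  by move=> r x y; rewrite !scaleVR scalerDr !scalerA mulrC.
have TM : forall x : VR V, `|(a *: (x : V) : VR V)| <= cR a * `|x|.
  by move=> x; rewrite !normVR nRZ.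
exact: (@Tcvg R (VR V) (fun v : VR V => (a *: (v : V) : VR V)) Tlin (cR a) TM s l sl).
Qed.

Lemma Klin a x y : Kop (a *: x + y) = a *: Kop x + Kop y.
Proof.
have es : forall b, series (termK (a *: x + y)) b =
    (a *: (series (termK x) b : V) + series (termK y) b : VR V).
  elim=> [|b IH].
    by rewrite /series /= !big_geq // scaler0 addr0.
  rewrite !seriesSr IH /termK ipDl // ipZl // scalerDl -scalerA.
  by rewrite scalerDr addrACA.
have cv : series (termK (a *: x + y)) @ \oo --> (a *: Kop x + Kop y : VR V).
  rewrite (_ : series (termK (a *: x + y)) = fun b =>
      (a *: (series (termK x) b : V) + series (termK y) b : VR V)); last first.
    by apply: funext => b; rewrite es.
  apply: cvgD; last exact: (@Kcvg y).
  exact: scale_cvg (@Kcvg x).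
exact: (@cvg_lim (VR V) (@norm_hausdorff _ (VR V)) _ _ _ _ _ cv).
Qed.

Lemma Kw n : (forall k, ip (w n) (w k) = (k == n)%:R) -> Kop (w n) = d n.
Proof.
move=> hn.
have cv : series (termK (w n)) @ \oo --> (d n : VR V).
  apply: cvg_near_cst; exists n.+1 => // b /= nb.
  rewrite /series /= (bigD1_seq n) ?mem_index_iota ?iota_uniq //=.
  rewrite /termK hn eqxx scale1r big1_seq ?addr0 // => k /andP[kn _].
  by rewrite hn (negbTE kn) scale0r.
exact: (@cvg_lim (VR V) (@norm_hausdorff _ (VR V)) _ _ _ _ _ cv).
Qed.
End K.

Section Op.
Variable R : realType.
Variable V : completeNormedModType R[i].

Lemma Re_le (a b : R[i]) : a <= b -> complex.Re a <= complex.Re b.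
Proof. by rewrite lecE => /andP[]. Qed.

Lemma Re_mulRC (a : R[i]) (r : R) : complex.Re (a * RC r) = complex.Re a * r.
Proof. by case: a => a b /=; rewrite mulr0 subr0. Qed.

Lemma blo_R (U : V -> V) : bounded_linear_op U ->
  (forall (r : R) (x y : VR V), (U (r *: x + y) : VR V) = r *: (U x : VR V) + U y) /\
  exists M : R, forall x : VR V, `|(U x : VR V)| <= M * `|x|.
Proof.
case=> lin [MU hMU]; split.
  by move=> r x y; rewrite !scaleVR lin.
exists (complex.Re MU) => x; rewrite !normVR.
by have := Re_le (hMU x); rewrite !nRE Re_mulRC.
Qed.

Lemma bounded_inverse (U : V -> V) : bounded_linear_op U -> bijective U ->
  exists A : R, 0 <= A /\ forall x, nR x <= A * nR (U x).
Proof.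
move=> /blo_R [Tlin [M TM]] bU.
have surj : forall y : VR V, exists x : VR V, U x = y.
  by case: bU => Ui _ h y; exists (Ui y); rewrite h.
have [C [C0 hC]] := @open_map R (VR V) U Tlin surj.
have := @iter_solve R (VR V) U Tlin M TM C C0 hC.
move=> hs; exists (2 * C); split; first by rewrite mulr_ge0.
move=> x; have [x' [ex' bx']] := hs (U x).
by move: bx'; rewrite (bij_inj bU ex') !normVR.
Qed.

Lemma perturb (U K : V -> V) (A del : R) :
  bounded_linear_op U -> bijective U -> 0 <= A -> (forall x, nR x <= A * nR (U x)) ->
  (forall a x y, K (a *: x + y) = a *: K x + K y) -> 0 <= del ->
  (forall x, nR (K x) <= del * nR x) -> A * del <= 2^-1 ->
  bounded_linear_op (fun x => U x + K x) /\ bijective (fun x => U x + K x).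
Proof.
move=> bU bijU A0 hA Klin del0 hK Adel.
have [_ [M hM]] := blo_R bU.
have blo' : bounded_linear_op (fun x => U x + K x).
  split.
    move=> a x y; case: bU => lin _.
    by rewrite lin Klin scalerDr addrACA.
  exists (RC (M + del)) => x.
  rewrite !nRE -rmorphM lecR mulrDl.
  apply: (le_trans (nR_D (U x : VR V) (K x))); apply: lerD.
    exact: (hM x).
  exact: hK.
have [Tlin _] := blo_R blo'.
have inj : injective (fun x => U x + K x).
  move=> x y /= exy; apply/eqP; rewrite -subr_eq0; apply/eqP.
  set z := x - y.
  have e0 : U z + K z = 0.
    have := @TB R (VR V) (fun x => U x + K x) Tlin x y.
    by rewrite /= exy subrr.
  have eU : U z = - K z by apply/eqP; rewrite -addr_eq0; apply/eqP.
  have h1 := hA z; rewrite eU in h1.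
  have nN : nR (- K z) = nR (K z) by rewrite -!normVR normrN.
  rewrite nN in h1.
  have h2 := hK z.
  have nz0 := nR_ge0 z.
  have hz : nR z <= 0.
    have : A * nR (K z) <= A * (del * nR z) by apply: ler_wpM2l.
    nra.
  by apply: nR_eq0; apply/eqP; rewrite eq_le hz nR_ge0.
have surj : forall y, exists x, U x + K x = y.
  case: bijU => Ui c1 c2.
  have hs : forall y : VR V, exists x : VR V,
      `|x| <= A * `|y| /\ `|y - (U x + K x : VR V)| <= `|y| / 2.
    move=> y; exists (Ui y); rewrite !normVR; split.
      by have := hA (Ui y); rewrite c2.
    have -> : (y - (U (Ui y) + K (Ui y)) : VR V) = - K (Ui y).
      by rewrite c2 opprD addrA subrr add0r.
    rewrite -normVR normrN normVR.
    apply: (le_trans (hK _)).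
    have := hA (Ui y); rewrite c2 => h.
    have := nR_ge0 (Ui y); have := nR_ge0 y; have := nR_ge0 (K (Ui y)).
    have : del * nR (Ui y) <= del * (A * nR y) by apply: ler_wpM2l.
    nra.
  have [_ [M' hM']] := blo_R blo'.
  have := @iter_solve R (VR V) (fun x => U x + K x) Tlin M' hM' A A0 hs.
  by move=> hh y; have [x [ex _]] := hh y; exists x.
split => //.
have [Ui hUi] := choice surj.
exists Ui => [x|y]; last exact: hUi.
by apply: inj; rewrite hUi.
Qed.
End Op.

Section Idx.
Variables (sigma : seq nat) (m N0 : nat).
Definition sN := [seq n <- iota 0 N0 | n \notin sigma].
Definition sig' := sigma ++ iota 0 N0.
Definition m' := (m + size sN)%N.

Lemma notin_l n : n \notin sig' -> n \notin sigma.
Proof. by rewrite mem_cat negb_or => /andP[]. Qed.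
Lemma sN_notin (j : 'I_(size sN)) : nth 0%N sN j \notin sigma.
Proof. by have := mem_nth 0%N (ltn_ord j); rewrite mem_filter => /andP[]. Qed.
Lemma sN_uniq : uniq sN.
Proof. by rewrite filter_uniq // iota_uniq. Qed.

Definition phi (k : pr_index sig' m') : pr_index sigma m :=
  match k with
  | inl n => inl (exist (fun x => x \notin sigma) (sval n) (notin_l (svalP n)))
  | inr j => match fintype.split j with
             | inl j1 => inr j1
             | inr j2 => inl (exist (fun x => x \notin sigma) (nth 0%N sN j2) (sN_notin j2))
             end
  end.

Lemma phi_inj : injective phi.
Proof.
have key (n : {x : nat | x \notin sig'}) (j2 : 'I_(size sN)) : sval n <> nth 0%N sN j2.
  move=> e; have := svalP n; rewrite e mem_cat.
  have := mem_nth 0%N (ltn_ord j2); rewrite mem_filter => /andP[_ ->].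
  by rewrite orbT.
case=> [n|j] [n'|j'] /=.
- by move=> [e]; congr inl; apply: val_inj.
- case: (fintype.split j') => // j2 [e]; by have := key n j2 e.
- case: (fintype.split j) => // j2 [e]; by have := key n' j2 (esym e).
- case ej: (fintype.split j) => [j1|j2]; case ej': (fintype.split j') => [j1'|j2'] //=.
  + by move=> [e]; rewrite -(splitK j) -(splitK j') ej ej' e.
  + move=> [e]; rewrite -(splitK j) -(splitK j') ej ej'.
    suff -> : j2 = j2' by []. apply: val_inj => /=.
    by apply/eqP; rewrite -(nth_uniq 0%N _ _ sN_uniq) ?ltn_ord // e.
Qed.

Lemma phi_inr (j : 'I_m') : phi (inr j) =
  match fintype.split j with
  | inl j1 => inr j1
  | inr j2 => inl (exist (fun x => x \notin sigma) (nth 0%N sN j2) (sN_notin j2))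
  end.
Proof. by []. Qed.

Lemma phi_surj i : exists k, phi k = i.
Proof.
case: i => [[n nH]|j1].
  have [nin|nout] := boolP (n \in iota 0 N0).
    have nsN : n \in sN by rewrite mem_filter nH.
    have hidx : (index n sN < size sN)%N by rewrite index_mem.
    exists (inr (unsplit (inr (Ordinal hidx)))).
    rewrite phi_inr unsplitK; congr inl; apply: val_inj => /=.
    exact: nth_index.
  have nH' : n \notin sig' by rewrite mem_cat negb_or nH.
  by exists (inl (exist _ n nH')); congr inl; apply: val_inj.
by exists (inr (unsplit (inl j1))); rewrite phi_inr unsplitK.
Qed.

Lemma phi_inl (n : {x : nat | x \notin sig'}) :
  phi (inl n) = inl (exist (fun x => x \notin sigma) (sval n) (notin_l (svalP n))).
Proof. by []. Qed.

Lemma notin_sig'_ge (n : nat) : n \notin sig' -> (N0 <= n)%N.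
Proof.
rewrite mem_cat negb_or mem_iota => /andP[_]; rewrite add0n.
by rewrite -leqNgt.
Qed.
End Idx.

Lemma tail_small (R : realType) (a : nat -> R) (B : R) :
  (forall n, 0 <= a n) -> (forall N, \sum_(n < N) a n <= B) ->
  forall e, 0 < e -> exists N0, forall b,
    \sum_(n < b) (if (N0 <= n)%N then a n else 0) <= e.
Proof.
move=> a0 aB e e0.
have nd : nondecreasing_seq (series a).
  by apply: nondecreasing_series => n _ _; exact: a0.
have cv : cvgn (series a).
  apply: nondecreasing_is_cvgn => //; exists B => _ [n _ <-].
  by rewrite /series /= big_mkord.
have le_lim := nondecreasing_cvgn_le nd cv.
have := cv => /cvgrPdist_lt /(_ e e0) [N0 _ hN0].
exists N0 => b.
have hN := hN0 N0 (leqnn N0).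
rewrite -(big_mkord xpredT (fun n => if (N0 <= n)%N then a n else 0)).
have [bN0|N0b] := leqP b N0.
  rewrite big_nat_cond big1 ?ltW // => n /andP[/andP[_ nb] _].
  by rewrite leqNgt (leq_trans nb bN0).
rewrite (@big_cat_nat _ _ _ N0) //=; last exact: ltnW.
rewrite big_nat_cond big1 ?add0r; last first.
  by move=> n /andP[/andP[_ nb] _]; rewrite leqNgt nb.
have e1 : \sum_(N0 <= n < b) (if (N0 <= n)%N then a n else 0) = series a b - series a N0.
  rewrite /series /= (@big_cat_nat _ _ _ N0 0 b) //=; last exact: ltnW.
  rewrite addrAC subrr add0r; apply: eq_big_nat => n /andP[-> _] //.
rewrite e1.
have := le_lim b; move: hN; rewrite /=.
set L := limn _.
move=> hN hb.
have := ler_norm (L - series a N0).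
lra.
Qed.

End Aux.
Import Aux.

Theorem mainTheorem10 (R : realType) (V : completeNormedModType R[i])
  (ip : V -> V -> R[i]) (f g : nat -> V) :
  inner_product ip -> separable V ->
  pseudo_riesz_basis ip f ->
  (exists M : R[i], forall N : nat, \sum_(n < N) `|f n - g n| ^+ 2 <= M) ->
  pseudo_riesz_basis ip g.
Proof.
move=> hip _ [fbes [sigma [m [h [u [U [onb bU bijU hfam]]]]]]] hM.
split; first exact: (bessel_perturb hip fbes hM).
have [A [A0 hA]] := bounded_inverse bU bijU.
pose del : R := (2 * A + 2)^-1.
have del0 : 0 < del by rewrite invr_gt0; lra.
have Adel : A * del <= 2^-1.
  have e : del * (2 * A + 2) = 1 by rewrite /del mulVf //; apply/eqP => h0; lra.
  have : 0 < del := del0.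
  nra.
have [M hMc] := hM.
have hMr : forall N, \sum_(n < N) nR (f n - g n) ^+ 2 <= complex.Re M.
  move=> N; have := Re_le (hMc N).
  have e1 z : RC (nR z ^+ 2) = `|z| ^+ 2 by rewrite nRE rmorphXn.
  under eq_bigr do rewrite -e1.
  by rewrite -rmorph_sum.
have del20 : 0 < del ^+ 2 by rewrite exprn_gt0.
have [N0 hN0] := @tail_small R (fun n => nR (f n - g n) ^+ 2) (complex.Re M)
  (fun n => exprn_ge0 2 (nR_ge0 _)) hMr _ del20.
pose d n := if (N0 <= n)%N then g n - f n else 0.
have dtail : forall b, \sum_(n < b) nR (d n) ^+ 2 <= del ^+ 2.
  move=> b; apply: le_trans (hN0 b); apply: ler_sum => n _.
  rewrite /d; case: ifP => _.
    by rewrite /nR distrC.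
  by rewrite /nR normr0 /= expr0n.
have orth := onb.1.
pose w n := match (insub n : option {x : nat | x \notin sigma}) with
            | Some k => u (inl k) | None => 0 end.
have w_in n (H : n \notin sigma) : w n = u (inl (exist _ n H)).
  by rewrite /w insubT.
have w_out n : n \in sigma -> w n = 0.
  by move=> H; rewrite /w insubF // H.
have w_orth i j : i \notin sigma -> j \notin sigma -> ip (w i) (w j) = (i == j)%:R.
  by move=> Hi Hj; rewrite !w_in orth.
have wbes : forall x b, \sum_(n < b) `|ip x (w n)| ^+ 2 <= `|x| ^+ 2.
  move=> x b.
  rewrite -(big_mkord xpredT (fun n => `|ip x (w n)| ^+ 2)).
  rewrite (bigID (fun n => n \in sigma)) /= big1 ?add0r; last first.
    by move=> n H; rewrite w_out // ip0r // normr0 expr0n.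
  rewrite -big_filter; apply: bessel_seq_ineq => //.
    by rewrite filter_uniq // iota_uniq.
  by move=> i j; rewrite !mem_filter => /andP[Hi _] /andP[Hj _]; exact: w_orth.
pose K := Kop ip w d.
have Kl : forall a x y, K (a *: x + y) = a *: K x + K y := Klin hip wbes dtail.
have Kb : forall x, nR (K x) <= del * nR x := Kbound hip wbes del0 dtail.
have K_inl n (H : n \notin sigma) : K (u (inl (exist _ n H))) = d n.
  rewrite -w_in; apply: Kw => k.
  have [Hk|Hk] := boolP (k \in sigma).
    rewrite (w_out k Hk) ip0r //.
    suff -> : (k == n) = false by [].
    by apply/negbTE; apply: contraTneq Hk => ->.
  by rewrite w_orth // eq_sym.
have K_inr j : K (u (inr j)) = 0.
  apply: series_zero => k.
  have [Hk|Hk] := boolP (k \in sigma); first by rewrite (w_out k Hk) ip0r.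
  by rewrite w_in orth.
have [bU' bijU'] := perturb bU bijU A0 hA Kl (ltW del0) Kb Adel.
have [psi hpsi] := choice (@phi_surj sigma m N0).
pose U' := fun x => U x + K x.
pose h' := fun j : 'I_(m' sigma m N0) => U' (u (phi (inr j))).
exists (sig' sigma N0), (m' sigma m N0), h'.
exists (u \o (@phi sigma m N0)), U'; split => //.
- split.
    by move=> i j /=; rewrite orth (inj_eq (@phi_inj sigma m N0)).
  apply/seteqP; split => // x _.
  have : closure (lin_span u) x by rewrite onb.2.
  apply: closureS => y [s [c ->]].
  exists (map psi s), (c \o (@phi sigma m N0)).
  by rewrite big_map; apply: eq_bigr => i _ /=; rewrite hpsi.
- case=> [n|j] //=.
  rewrite /U' K_inl -hfam /= /d.
  by rewrite (notin_sig'_ge (svalP n)) addrC subrK.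
Qed.
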